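(* Let $\kappa$ be a Mahlo cardinal and let $A\subseteq\kappa$ be a stationary set of regular cardinals. Then $\kappa\in\operatorname{spec}(A)$.
   Context: For a set $A$ of regular cardinals, $\prod A$ is the set of functions $f$ with domain $A$ and $f(a)\in a$, ordered by pointwise domination. $\operatorname{spec}(A)$ is the set of regular cardinals $\lambda$ with $(\prod A,<)\geq_T\lambda$ in the Tukey order; equivalently, regular $\lambda$ such that there exists $\mathcal{F}\subseteq\prod A$ of size $\lambda$ such that every $\lambda$-sized subset of $\mathcal{F}$ is unbounded in $(\prod A,<)$ (i.e., not pointwise dominated by a single element of $\prod A$). *)

(* Defs.v *)
(* Ordinals below kappa are modelled as the elements of a type
   T equipped with a strict well-order lt whose order type is kappa; an element
   a : T is identified with the ordinal {x | lt x a} (its initial segment). *)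

Definition injective {X Y : Type} (f : X -> Y) : Prop :=
  forall x y, f x = f y -> x = y.

Definition le_card (X Y : Type) : Prop := exists f : X -> Y, injective f.

Section Ord.
Variable T : Type.
Variable lt : T -> T -> Prop.

Definition le (x y : T) : Prop := x = y \/ lt x y.

Definition is_well_order : Prop :=
  (forall x, ~ lt x x) /\
  (forall x y z, lt x y -> lt y z -> lt x z) /\
  (forall x y, lt x y \/ x = y \/ lt y x) /\
  well_founded lt.

Definition seg (a : T) : Type := {x : T | lt x a}.

Definition is_cardinal_pt (a : T) : Prop :=
  forall b, lt b a -> ~ le_card (seg a) (seg b).

Definition cofinal_in (a : T) (S : T -> Prop) : Prop :=
  (forall x, S x -> lt x a) /\ (forall x, lt x a -> exists y, S y /\ le x y).

Definition regular_pt (a : T) : Prop :=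
  le_card nat (seg a) /\ is_cardinal_pt a /\
  forall S, cofinal_in a S -> le_card (seg a) {x : T | S x}.

Definition unbounded (S : T -> Prop) : Prop :=
  forall x, exists y, S y /\ le x y.

Definition kappa_regular_cardinal : Prop :=
  le_card nat T /\
  (forall b : T, ~ le_card T (seg b)) /\
  (forall S, unbounded S -> le_card T {x : T | S x}).

Definition kappa_uncountable : Prop := ~ le_card T nat.

Definition kappa_strong_limit : Prop :=
  forall b : T, ~ le_card T (seg b -> bool).

Definition is_sup (s : T) (S : T -> Prop) : Prop :=
  (forall x, S x -> le x s) /\ (forall u, (forall x, S x -> le x u) -> le s u).

Definition closed (C : T -> Prop) : Prop :=
  forall S : T -> Prop, (forall x, S x -> C x) -> (exists x, S x) ->
    forall s, is_sup s S -> C s.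

Definition club (C : T -> Prop) : Prop := closed C /\ unbounded C.

Definition stationary (A : T -> Prop) : Prop :=
  forall C, club C -> exists x, A x /\ C x.

Definition kappa_mahlo : Prop :=
  kappa_regular_cardinal /\ kappa_uncountable /\ kappa_strong_limit /\
  stationary regular_pt.

Definition prodA (A : T -> Prop) : Type :=
  forall a : {x : T | A x}, seg (proj1_sig a).

Definition dominated (A : T -> Prop) (f g : prodA A) : Prop :=
  forall a, lt (proj1_sig (f a)) (proj1_sig (g a)).

(* kappa \in spec(A): some F subset of prod A of size kappa (given as an
   injective T-indexed family) all of whose kappa-sized subsets are unbounded *)
Definition kappa_in_spec (A : T -> Prop) : Prop :=
  exists F : T -> prodA A, injective F /\
    forall S : T -> Prop, le_card T {x : T | S x} ->
      ~ (exists g : prodA A, forall i, S i -> dominated A (F i) g).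

End Ord.

(* Main.v *)
Require Import Defs.
From Stdlib Require Import Classical ClassicalEpsilon ProofIrrelevance.

Section Aux.
Variable T : Type.
Variable lt : T -> T -> Prop.
Hypothesis Hwo : is_well_order T lt.

Lemma irr x : ~ lt x x.
Proof. destruct Hwo as [H _]; apply H. Qed.
Lemma ltt x y z : lt x y -> lt y z -> lt x z.
Proof. destruct Hwo as [_ [H _]]; apply H. Qed.
Lemma tri x y : lt x y \/ x = y \/ lt y x.
Proof. destruct Hwo as [_ [_ [H _]]]; apply H. Qed.
Lemma wf : well_founded lt.
Proof. destruct Hwo as [_ [_ [_ H]]]; apply H. Qed.

Lemma le_lt x y z : le T lt x y -> lt y z -> lt x z.
Proof. intros [->|h] h2; auto. eapply ltt; eauto. Qed.
Lemma lt_le x y z : lt x y -> le T lt y z -> lt x z.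
Proof. intros h [<-|h2]; auto. eapply ltt; eauto. Qed.
Lemma le_le x y z : le T lt x y -> le T lt y z -> le T lt x z.
Proof. intros [->|h] h2; auto. right; eapply lt_le; eauto. Qed.
Lemma nlt_le x y : ~ lt x y -> le T lt y x.
Proof. intros h. destruct (tri x y) as [h1|[->|h1]]; [tauto|left; auto|right; auto]. Qed.

Lemma ub2 x y : exists z, le T lt x z /\ le T lt y z.
Proof.
  destruct (tri x y) as [h|[->|h]].
  - exists y; split; [right; auto| left; auto].
  - exists y; split; left; auto.
  - exists x; split; [left; auto| right; auto].
Qed.

Lemma no_max : kappa_strong_limit T lt -> forall x, exists z, lt x z.
Proof.
  intros Hs x. apply NNPP; intro hn.
  assert (hall : forall z, le T lt z x).
  { intro z. apply nlt_le. intro h. apply hn; eauto. }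
  apply (Hs x).
  exists (fun t (y : seg T lt x) =>
            if excluded_middle_informative (t = proj1_sig y) then true else false).
  intros t1 t2 heq.
  assert (key : forall t, t <> x -> lt t x).
  { intros t ht. destruct (hall t); [contradiction|auto]. }
  destruct (classic (t1 = x)) as [e1|e1]; destruct (classic (t2 = x)) as [e2|e2].
  - congruence.
  - exfalso. pose proof (f_equal (fun f => f (exist _ t2 (key t2 e2))) heq) as h; simpl in h.
    destruct (excluded_middle_informative (t1 = t2)); destruct (excluded_middle_informative (t2 = t2)); try congruence.
  - exfalso. pose proof (f_equal (fun f => f (exist _ t1 (key t1 e1))) heq) as h; simpl in h.
    destruct (excluded_middle_informative (t1 = t1)); destruct (excluded_middle_informative (t2 = t1)); try congruence.
  - pose proof (f_equal (fun f => f (exist _ t1 (key t1 e1))) heq) as h; simpl in h.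
    destruct (excluded_middle_informative (t1 = t1)); destruct (excluded_middle_informative (t2 = t1)); congruence.
Qed.

Lemma least (P : T -> Prop) : (exists x, P x) -> exists m, P m /\ forall z, lt z m -> ~ P z.
Proof.
  intros [x hx]. apply NNPP; intro hn.
  assert (forall y, ~ P y).
  { intro y. induction y as [y IH] using (well_founded_ind wf).
    intro hy. apply hn. exists y. split; auto. }
  eapply H; eauto.
Qed.

Lemma sup_ex (R : T -> Prop) : (exists b, forall y, R y -> le T lt y b) -> exists s, is_sup T lt s R.
Proof.
  intros hb. destruct (least (fun u => forall y, R y -> le T lt y u) hb) as [m [hm1 hm2]].
  exists m. split; auto. intros u hu. apply nlt_le. intro h. exact (hm2 u h hu).
Qed.

Lemma sup_below (R : T -> Prop) s x : is_sup T lt s R -> lt x s -> exists c, R c /\ lt x c.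
Proof.
  intros [h1 h2] hx. apply NNPP; intro hn.
  assert (le T lt s x).
  { apply h2. intros c hc. apply nlt_le. intro h. apply hn; eauto. }
  apply (irr x). eapply lt_le; eauto.
Qed.

Lemma sig_inj (P : T -> Prop) (p q : {x | P x}) : proj1_sig p = proj1_sig q -> p = q.
Proof.
  destruct p as [x px], q as [y py]; simpl; intros ->. f_equal. apply proof_irrelevance.
Qed.

Lemma countable_bounded : kappa_regular_cardinal T lt -> kappa_uncountable T ->
  forall s : nat -> T, exists b, forall n, lt (s n) b.
Proof.
  intros [_ [_ Hr]] Hu s. apply NNPP; intro hn.
  set (R := fun y => exists n, y = s n).
  assert (hR : unbounded T lt R).
  { intro x. apply NNPP; intro h. apply hn. exists x. intro n.
    apply NNPP; intro h2. apply h. exists (s n). split; [exists n; auto|].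
    apply nlt_le; auto. }
  destruct (Hr R hR) as [i hi].
  apply Hu.
  exists (fun t => proj1_sig (constructive_indefinite_description _ (proj2_sig (i t)))).
  intros t1 t2 h. apply hi. apply sig_inj.
  destruct (constructive_indefinite_description _ (proj2_sig (i t1))) as [n1 e1].
  destruct (constructive_indefinite_description _ (proj2_sig (i t2))) as [n2 e2].
  simpl in h. subst. congruence.
Qed.

Lemma big_unbounded : kappa_regular_cardinal T lt ->
  forall S, le_card T {x | S x} -> unbounded T lt S.
Proof.
  intros [_ [Hb _]] S [i hi]. intro x. apply NNPP; intro hn.
  assert (hlt : forall y, S y -> lt y x).
  { intros y hy. apply NNPP; intro h. apply hn. exists y. split; auto. apply nlt_le; auto. }
  apply (Hb x).
  exists (fun t => exist (fun y => lt y x) (proj1_sig (i t)) (hlt _ (proj2_sig (i t)))).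
  intros t1 t2 h. apply hi. apply sig_inj.
  exact (f_equal (@proj1_sig _ _) h).
Qed.

Lemma club_lemma : kappa_mahlo T lt -> forall A : T -> Prop, stationary T lt A ->
  forall S, unbounded T lt S -> forall m1 m2,
  exists a, A a /\ lt m1 a /\ lt m2 a /\
    forall x, lt x a -> exists y, S y /\ le T lt x y /\ lt y a.
Proof.
  intros [Hreg [Hu [Hs _]]] A HA S HS m1 m2.
  set (C := fun a => lt m1 a /\ lt m2 a /\
    forall x, lt x a -> exists y, S y /\ le T lt x y /\ lt y a).
  destruct (HA C) as [a [ha hc]].
  2:{ exists a. destruct hc as [h1 [h2 h3]]. auto. }
  split.
  - intros Q hQ [x0 hx0] s hsup.
    destruct (hQ x0 hx0) as [h1 [h2 _]].
    assert (le T lt x0 s) by (apply (proj1 hsup); auto).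
    split; [eapply lt_le; eauto|split; [eapply lt_le; eauto|]].
    intros x hx. destruct (sup_below Q s x hsup hx) as [c [hc hxc]].
    destruct (hQ c hc) as [_ [_ h3]]. destruct (h3 x hxc) as [y [hy1 [hy2 hy3]]].
    exists y; split; auto; split; auto. eapply lt_le; eauto. apply (proj1 hsup); auto.
  - intro x.
    assert (hstep : forall t, exists y, S y /\ lt t y).
    { intro t. destruct (no_max Hs t) as [z hz]. destruct (HS z) as [y [hy1 hy2]].
      exists y; split; auto. eapply lt_le; eauto. }
    set (nxt := fun t => proj1_sig (constructive_indefinite_description _ (hstep t))).
    assert (hnxt : forall t, S (nxt t) /\ lt t (nxt t)).
    { intro t. unfold nxt. destruct (constructive_indefinite_description _ (hstep t)); auto. }
    destruct (ub2 x m1) as [u1 [hu1 hu2]]. destruct (ub2 u1 m2) as [u [hu3 hu4]].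
    destruct (no_max Hs u) as [s0 hs0].
    set (sq := fun n => Nat.iter n nxt s0).
    destruct (countable_bounded Hreg Hu sq) as [b hb].
    destruct (sup_ex (fun y => exists n, y = sq n)) as [a hsup].
    { exists b. intros y [n ->]. right; auto. }
    assert (hle : forall n, le T lt (sq n) a) by (intro n; apply (proj1 hsup); eauto).
    assert (h0 : le T lt s0 a) by exact (hle 0).
    exists a. split.
    + split; [|split].
      * eapply le_lt; [exact hu2|]. eapply le_lt; [exact hu3|]. eapply lt_le; eauto.
      * eapply le_lt; [exact hu4|]. eapply lt_le; eauto.
      * intros x' hx'. destruct (sup_below _ a x' hsup hx') as [c [[n ->] hc]].
        exists (sq (Datatypes.S n)). destruct (hnxt (sq n)) as [h1 h2].
        split; [exact h1|split].
        -- right. eapply ltt; eauto.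
        -- destruct (hnxt (sq (Datatypes.S n))) as [_ h3]. eapply lt_le; [exact h3|]. exact (hle (Datatypes.S (Datatypes.S n))).
    + eapply le_le; [exact hu1|]. eapply le_le; [exact hu3|]. eapply le_le; [right; exact hs0|]. exact h0.
Qed.

End Aux.

Lemma ex_below (T : Type) (lt : T -> T -> Prop) (A : T -> Prop)
  (HAreg : forall a, A a -> regular_pt T lt a) (a : {x | A x}) :
  exists x, lt x (proj1_sig a).
Proof.
  destruct (HAreg _ (proj2_sig a)) as [[f _] _].
  exists (proj1_sig (f 0)). exact (proj2_sig (f 0)).
Qed.

Theorem proposition4p1 (T : Type) (lt : T -> T -> Prop)
  (Hwo : is_well_order T lt) (Hmahlo : kappa_mahlo T lt)
  (A : T -> Prop) (HAreg : forall a, A a -> regular_pt T lt a)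
  (HAstat : stationary T lt A) :
  kappa_in_spec T lt A.
Proof.
  set (elt := fun a : {x | A x} =>
    constructive_indefinite_description _ (ex_below T lt A HAreg a)).
  set (F := fun (al : T) (a : {x | A x}) =>
    match excluded_middle_informative (lt al (proj1_sig a)) with
    | left h => exist (fun y => lt y (proj1_sig a)) al h
    | right _ => elt a end : seg T lt (proj1_sig a)).
  assert (key : forall al a, lt al (proj1_sig a) -> proj1_sig (F al a) = al).
  { intros al a h. unfold F. destruct (excluded_middle_informative _); [reflexivity|contradiction]. }
  exists F. split.
  - intros al be heq.
    destruct (club_lemma T lt Hwo Hmahlo A HAstat (fun _ => True)
      (fun x => ex_intro _ x (conj I (or_introl eq_refl))) al be) as [a [ha [h1 [h2 _]]]].
    pose proof (f_equal (fun f => proj1_sig (f (exist A a ha))) heq) as h; cbv beta in h.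
    rewrite (key al (exist A a ha) h1), (key be (exist A a ha) h2) in h. exact h.
  - intros S HS [g Hg].
    pose proof Hmahlo as [Hreg _].
    pose proof (big_unbounded T lt Hwo Hreg S HS) as Hun.
    destruct Hreg as [[f _] _].
    destruct (club_lemma T lt Hwo Hmahlo A HAstat S Hun (f 0) (f 0)) as [a [ha [_ [_ hc]]]].
    destruct (hc (proj1_sig (g (exist A a ha))) (proj2_sig (g (exist A a ha)))) as [y [hy1 [hy2 hy3]]].
    pose proof (Hg y hy1 (exist A a ha)) as hd.
    rewrite (key y (exist A a ha) hy3) in hd.
    apply (irr T lt Hwo y). eapply lt_le; eauto.
Qed.
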